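(* Let $a,b$ be integers and let $G\in\mathscr{G}_{a,b}$ be a tricyclic graph with at least one pendant vertex. Suppose $C_p=vu_1u_2\ldots u_{p-1}v$ is an internal cycle of the base $\widetilde G$ with $N_{\widetilde G}(v)=\{w,u_1,u_{p-1}\}$. Then $d_G(v)=3$, $p=3$ and $G\in\mathscr{G}_{6,-1}$. Moreover, $d_G(w)=2$, and one of $u_1,u_{p-1}$ has degree $2$ in $G$ while the other has degree $a+b-1=4$ in $G$.
   Context: All graphs are simple and connected; $d_G(v)$ is the degree of $v$, $N_G(v)$ its neighbourhood. A tricyclic graph is a connected graph with $|E_G|=|V_G|+2$. For integers $a,b$, $\mathscr{G}_{a,b}$ is the set of connected graphs $G$ such that for every $v\in V_G$, $\sum_{u\in N_G(v)}d_G(u)=a\,d_G(v)+b-d_G(v)^2$. A pendant vertex is a vertex of degree $1$. The base $\widetilde{G}$ of $G$ is the subgraph obtained from $G$ by repeatedly deleting pendant vertices until none remain. An internal cycle of $\widetilde G$ is a cycle $u_0u_1\ldots u_k$ with $u_0=u_k$, $k\ge 3$, $d_{\widetilde G}(u_0)\ge 3$ and $d_{\widetilde G}(u_i)=2$ for $1\le i\le k-1$. *)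

(* Defs.v *)
From mathcomp Require Import all_boot all_order all_algebra.
Set Implicit Arguments. Unset Strict Implicit. Unset Printing Implicit Defensive.
Import GRing.Theory Num.Theory.
Local Open Scope ring_scope.

Section Graph.
Variables (T : finType) (e : rel T).

Definition simple_graph : Prop := symmetric e /\ irreflexive e.
Definition connected_graph : Prop := forall x y : T, connect e x y.

Definition nbhd (v : T) : {set T} := [set u | e v u].
Definition deg (v : T) : nat := #|nbhd v|.

Definition edges : {set {set T}} := [set [set x; y] | x in T, y in T & e x y].

Definition tricyclic : Prop := #|edges| = (#|T| + 2)%N.

Definition in_Gab (a b : int) : Prop :=
  forall v : T, ((\sum_(u in nbhd v) deg u)%N)%:Z
                = a * (deg v)%:Z + b - ((deg v)%:Z) ^+ 2.

Definition pendant (v : T) : Prop := deg v = 1%N.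

Definition degIn (S : {set T}) (v : T) : nat := #|[set u in S | e v u]|.

Inductive prune_reach (S : {set T}) : {set T} -> Prop :=
  | prune_refl : prune_reach S S
  | prune_step (S' : {set T}) (x : T) :
      prune_reach S S' -> x \in S' -> degIn S' x = 1%N -> prune_reach S (S' :\ x).

Definition is_base (B : {set T}) : Prop :=
  prune_reach [set: T] B /\ (forall x, x \in B -> degIn B x != 1%N).

(* internal cycle v u_1 ... u_{p-1} v of the base (induced on B),
   given by v and the sequence us = [:: u_1; ...; u_{p-1}], p = size us + 1 *)
Definition internal_cycle (B : {set T}) (v : T) (us : seq T) : Prop :=
  (2 <= size us)%N /\
  [/\ uniq (v :: us),
      path e v us && e (last v us) v,
      all (fun x => x \in B) (v :: us),
      (3 <= degIn B v)%N &
      all (fun x => degIn B x == 2%N) us].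

End Graph.

(* Main.v *)
Require Import Defs.
From mathcomp Require Import all_boot all_order all_algebra.
From mathcomp Require Import zify.
Import GRing.Theory Num.Theory.
Set Implicit Arguments. Unset Strict Implicit. Unset Printing Implicit Defensive.

Section G.
Variables (T : finType) (e : rel T).
Hypothesis Hsym : symmetric e.
Hypothesis Hirr : irreflexive e.
Hypothesis Hconn : connected_graph e.
Variables (a b : int).
Hypothesis Hab : in_Gab e a b.

Local Notation dg := (deg e).

Lemma inN x y : (y \in nbhd e x) = e x y.
Proof. by rewrite inE. Qed.

Lemma deg_ge1 x y : e x y -> (1 <= dg x)%N.
Proof. by move=> h; rewrite /deg card_gt0; apply/set0Pn; exists y; rewrite inN. Qed.

Lemma leaf_nbhd l x : dg l = 1%N -> e l x -> nbhd e l = [set x].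
Proof.
move=> hl hx; apply/eqP; rewrite eq_sym eqEcard sub1set inN hx /=.
by rewrite cards1 -hl.
Qed.

Lemma leaf_nbr_deg l x : dg l = 1%N -> e l x -> Posz (dg x) = (a + b - 1)%R.
Proof.
move=> hl hx; have := Hab l; rewrite (leaf_nbhd hl hx) big_set1 hl => ->.
by rewrite GRing.mulr1 GRing.expr1n.
Qed.

Lemma closed_all (C : {set T}) z : z \in C ->
  (forall x y, x \in C -> e x y -> y \in C) -> forall y, y \in C.
Proof.
move=> Hz Hcl y; have /connectP [p Hp ->] := Hconn z y.
elim: p z Hz Hp => //= x p IH z Hz /andP [Hzx Hp]; apply: IH Hp; exact: Hcl Hzx.
Qed.


Lemma big_setD1n (A : {set T}) x (F : T -> nat) : x \in A ->
  (\sum_(i in A) F i = F x + \sum_(i in A :\ x) F i)%N.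
Proof. by move=> hx; rewrite (big_setD1 x hx). Qed.

Lemma sum_ge_card (A : {set T}) (F : T -> nat) :
  (forall i, i \in A -> 1 <= F i)%N -> (#|A| <= \sum_(i in A) F i)%N.
Proof. by move=> h; rewrite -sum1_card; apply: leq_sum. Qed.

Lemma sum_eq_card (A : {set T}) (F : T -> nat) :
  (forall i, i \in A -> 1 <= F i)%N -> (\sum_(i in A) F i <= #|A|)%N ->
  forall i, i \in A -> F i = 1%N.
Proof.
move=> h hs i hi; apply/eqP; rewrite eqn_leq h // andbT leqNgt; apply/negP => hF.
move: hs; rewrite (big_setD1n _ hi) (cardsD1 i A) hi.
have := sum_ge_card (A := A :\ i) (F := F) (fun j hj => h j (proj2 (setD1P hj))).
lia.
Qed.

Lemma sqge0 (x : int) : (0 <= (x + 1) * x)%R.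
Proof. have [h|h] : (x <= -1 \/ 0 <= x)%R by lia. all: nia. Qed.

Variables (v0 u1 u2 : T).
Hypotheses (Hv1 : e v0 u1) (Hv2 : e v0 u2) (H12 : u1 != u2)
  (Hd1 : dg u1 != 1%N) (Hd2 : dg u2 != 1%N) (Hdv : dg v0 != 1%N).

Lemma keyZ z l t : e z l -> dg l = 1%N -> exists u, [/\ e z u, dg u != 1%N & u != t].
Proof.
move=> hzl hl.
case: (pickP [pred u | [&& e z u, dg u != 1%N & u != t]]) => [u /and3P[h1 h2 h3] | Hn];
  first by exists u.
exfalso.
have NL u : e z u -> dg u != 1%N -> u = t.
  by move=> h1 h2; have := Hn u; rewrite /= h1 h2 /= => /negbFE/eqP.
have LF u : e z u -> u != t -> dg u = 1%N.
  by move=> h1 h2; apply/eqP; apply: contraNT h2 => h3; rewrite (NL u h1 h3).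
case Ht: (e z t && (dg t != 1%N)).
-
  move/andP: Ht => [hzt hdt].
  set K := dg z. set D := dg t.
  have hK : Posz K = (a + b - 1)%R by apply: (leaf_nbr_deg hl); rewrite Hsym.
  have hlt : l != t by apply/eqP => h; move: hdt; rewrite -h hl.
  have hSz : (\sum_(u in nbhd e z) dg u = D + #|nbhd e z :\ t|)%N.
    rewrite (big_setD1n (x := t)) ?inN // -sum1_card; congr (_ + _)%N.
    by apply: eq_bigr => u; rewrite !inE => /andP[h1 h2]; apply: LF.
  have hKc : K = (1 + #|nbhd e z :\ t|)%N by rewrite /K /deg (cardsD1 t) inN hzt.
  have hSt : (\sum_(u in nbhd e t) dg u = K + \sum_(u in nbhd e t :\ z) dg u)%N.
    by rewrite (big_setD1n (x:=z)) ?inN // Hsym.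
  have hDc : D = (1 + #|nbhd e t :\ z|)%N by rewrite /D /deg (cardsD1 z) inN Hsym hzt.
  have hge : forall u, u \in nbhd e t :\ z -> (1 <= dg u)%N.
    by move=> u /setD1P[_]; rewrite inN => h; apply: (deg_ge1 (y:=t)); rewrite Hsym.
  have hs1 := sum_ge_card hge.
  have hz := Hab z; have ht := Hab t; rewrite hSz in hz; rewrite hSt in ht.
  rewrite -/K -/D in hz ht.
  have hle : (\sum_(u in nbhd e t :\ z) dg u <= #|nbhd e t :\ z|)%N.
    move: hs1 hz ht hK hKc hDc.
    set s := \sum_(u in nbhd e t :\ z) dg u.
    set c := #|nbhd e z :\ t|. set m := #|nbhd e t :\ z|.
    move=> hs1 hz ht hK hKc hDc.
    have h1 := sqge0 (Posz K - 2).
    have h2 := sqge0 (a - Posz K - 2).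
    have hP := mulr_ge0 h1 h2.
    rewrite !GRing.expr2 in hz ht. nia.
  have Lt := sum_eq_card hge hle.
  have LT u : e t u -> u != z -> dg u = 1%N.
    by move=> h1 h2; apply: Lt; rewrite in_setD1 h2 inN h1.
  pose C := [set x | [|| x == z, x == t, e z x | e t x]].
  have Cz : z \in C by rewrite inE eqxx.
  have Hcl : forall x y, x \in C -> e x y -> y \in C.
    move=> x y; rewrite !inE => /or4P[/eqP->|/eqP->|hx|hx] hxy.
    - by rewrite hxy !orbT.
    - by rewrite hxy !orbT.
    - case: (eqVneq x t) => [<-|hxt]; first by rewrite hxy !orbT.
      have hxw : e x z by rewrite Hsym.
      have hn := leaf_nbhd (LF _ hx hxt) hxw.
      have : y \in nbhd e x by rewrite inN.
      rewrite hn; by rewrite inE => /eqP->; rewrite eqxx.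
    - case: (eqVneq x z) => [<-|hxz]; first by rewrite hxy !orbT.
      have hxw : e x t by rewrite Hsym.
      have hn := leaf_nbhd (LT _ hx hxz) hxw.
      have : y \in nbhd e x by rewrite inN.
      rewrite hn; by rewrite inE => /eqP->; rewrite eqxx orbT.
  have hv := closed_all Cz Hcl v0.
  have nz : v0 != z.
    apply/eqP => h; subst v0.
    by move: H12; rewrite (NL _ Hv1 Hd1) (NL _ Hv2 Hd2) eqxx.
  have nt : v0 != t.
    apply/eqP => h; subst v0.
    have e1 : u1 = z by apply/eqP; apply: contraNT Hd1 => h; rewrite LT.
    have e2 : u2 = z by apply/eqP; apply: contraNT Hd2 => h; rewrite LT.
    by move: H12; rewrite e1 e2 eqxx.
  move: hv; rewrite inE (negbTE nz) (negbTE nt) /= => /orP[h|h].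
  + by move: Hdv; rewrite LF.
  + by move: Hdv; rewrite LT.
-
  have LA u : e z u -> dg u = 1%N.
    move=> h1; apply/eqP; apply: contraFT Ht => h2.
    by rewrite -(NL u h1 h2) h1 h2.
  pose C := [set x | (x == z) || e z x].
  have Cz : z \in C by rewrite inE eqxx.
  have Hcl : forall x y, x \in C -> e x y -> y \in C.
    move=> x y; rewrite !inE => /orP[/eqP->|hx] hxy; first by rewrite hxy orbT.
    have hxw : e x z by rewrite Hsym.
    have hn := leaf_nbhd (LA _ hx) hxw.
    have : y \in nbhd e x by rewrite inN.
    rewrite hn; by rewrite inE => /eqP->; rewrite eqxx.
  have hv := closed_all Cz Hcl v0.
  move: hv; rewrite inE => /orP[/eqP h|h].
  + by subst v0; move: Hd1; rewrite LA.
  + by move: Hdv; rewrite LA.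
Qed.



Lemma outside_leaf S : prune_reach e [set: T] S -> forall x, x \notin S -> dg x = 1%N.
Proof.
elim => [|S' x HS IH hxS hdeg] y; first by rewrite inE.
rewrite in_setD1 negb_and negbK => /orP[/eqP->{y}|hy]; last exact: IH.
have /cards1P [t ht] : #|[set u in S' | e x u]| == 1%N by apply/eqP.
have hxt : e x t.
  have : t \in [set u in S' | e x u] by rewrite ht set11.
  by rewrite inE => /andP[].
have OUT u : e x u -> u != t -> u \notin S'.
  move=> h1 h2; apply/negP => h3.
  have : u \in [set u in S' | e x u] by rewrite inE h3 h1.
  by rewrite ht inE (negbTE h2).
apply/eqP; apply: contraT => hne.
have hd1 := deg_ge1 hxt.
have : (0 < #|nbhd e x :\ t|)%N.
  move: hne hd1; rewrite /deg (cardsD1 t) inN hxt; lia.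
rewrite card_gt0 => /set0Pn [l]; rewrite in_setD1 inN => /andP[hlt hxl].
have hl := IH l (OUT _ hxl hlt).
have [u [hxu hdu hut]] := @keyZ x l t hxl hl.
by move: hdu; rewrite IH // OUT.
Qed.

Lemma Bsplit (B : {set T}) x : (forall y, y \notin B -> dg y = 1%N) ->
  exists l, [/\ dg x = (degIn e B x + l)%N,
     (\sum_(u in nbhd e x) dg u = \sum_(u in [set u in B | e x u]) dg u + l)%N &
     (l = 0%N \/ Posz (dg x) = (a + b - 1)%R)].
Proof.
move=> HL.
have eB : [set u in B | e x u] = nbhd e x :&: B by apply/setP => u; rewrite !inE andbC.
exists #|nbhd e x :\: B|; split.
- by rewrite /degIn eB cardsID.
- rewrite (big_setID B) eB; congr (_ + _)%N; rewrite -sum1_card.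
  by apply: eq_bigr => u; rewrite inE => /andP[h1 _]; apply: HL.
- case: (posnP #|nbhd e x :\: B|) => [->|]; first by left.
  rewrite card_gt0 => /set0Pn [u]; rewrite !inE => /andP[h1 h2]; right.
  by apply: (leaf_nbr_deg (HL _ h1)); rewrite Hsym.
Qed.


Lemma degIn_le (B : {set T}) x : (degIn e B x <= dg x)%N.
Proof. by apply: subset_leq_card; apply/subsetP => u; rewrite !inE => /andP[]. Qed.

Lemma cyc_vertex (B : {set T}) x y1 y2 : (forall y, y \notin B -> dg y = 1%N) ->
  degIn e B x = 2%N -> y1 \in B -> y2 \in B -> e x y1 -> e x y2 -> y1 != y2 ->
  exists l, [/\ dg x = (2 + l)%N,
    (\sum_(u in nbhd e x) dg u = dg y1 + dg y2 + l)%N &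
    (l = 0%N \/ Posz (dg x) = (a + b - 1)%R)].
Proof.
move=> HL h2 hy1 hy2 e1 e2 n12.
have [l [hd hs ht]] := Bsplit x HL.
have eS : [set u in B | e x u] = [set y1; y2].
  apply/eqP; rewrite eq_sym eqEcard; apply/andP; split.
  - by apply/subsetP => u; rewrite !inE => /orP[]/eqP->; rewrite ?hy1 ?e1 ?hy2 ?e2.
  - by move: h2; rewrite /degIn => ->; rewrite cards2 n12.
exists l; split => //.
- by rewrite hd h2.
- by rewrite hs eS big_setU1 ?inE // big_set1.
Qed.

Lemma k_ge3 x0 : dg x0 = 1%N -> (3 <= a + b - 1)%R.
Proof.
move=> h0.
have /cards1P [y hy] : #|nbhd e x0| == 1%N by apply/eqP.
have hxy : e x0 y by rewrite -inN hy set11.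
have hk := leaf_nbr_deg h0 hxy.
have hyx : e y x0 by rewrite Hsym.
have [n1 [h1 d1 n1x]] := @keyZ y x0 x0 hyx h0.
have [n2 [h2 d2 n21]] := @keyZ y x0 n1 hyx h0.
have n2x : n2 != x0 by apply/eqP => h; move: d2; rewrite h h0.
have : (3 <= dg y)%N.
  have -> : 3%N = #|x0 |: (n1 |: [set n2])|.
    by rewrite !cardsU1 cards1 !inE (eq_sym x0 n1) (negbTE n1x) (eq_sym x0 n2) (negbTE n2x)
      (eq_sym n1 n2) (negbTE n21).
  apply: subset_leq_card; apply/subsetP => u.
  by move=> /setU1P[->|/setU1P[->|/set1P->]]; rewrite inN.
move: hk; lia.
Qed.

End G.



Local Open Scope ring_scope.

Lemma ar3 (a b k dv dw c1 cl : int) :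
  k = a + b - 1 -> 3 <= k -> 2 <= dw ->
  (dv = 3 \/ dv = k) -> (c1 = 2 \/ c1 = k) -> (cl = 2 \/ cl = k) ->
  dw + c1 + cl + (dv - 3) = a * dv + b - dv ^+ 2 ->
  dv + cl + (c1 - 2) = a * c1 + b - c1 ^+ 2 ->
  c1 + dv + (cl - 2) = a * cl + b - cl ^+ 2 ->
  [/\ dv = 3, k = 4, a = 6, dw = 2 & ((c1 = 2 /\ cl = 4) \/ (cl = 2 /\ c1 = 4))].
Proof.
move=> hk k3 dw2 [->|->] [->|->] [->|->]; rewrite ?expr2 => h1 h2 h3;
 have [ha|[ha|ha]] : a <= k + 2 \/ a = k + 3 \/ k + 4 <= a by lia.
all: first [exfalso; nia | (split; [nia|nia|nia|nia| first [left; split; nia | right; split; nia]])].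
Qed.

Lemma ar4 (a b k dv dw c1 c2 x3 cl y z : int) :
  k = a + b - 1 -> 3 <= k -> 2 <= dw ->
  (dv = 3 \/ dv = k) -> (c1 = 2 \/ c1 = k) -> (c2 = 2 \/ c2 = k) ->
  (x3 = 2 \/ x3 = k) -> (cl = 2 \/ cl = k) -> (y = 2 \/ y = k) -> (z = 2 \/ z = k) ->
  dw + c1 + cl + (dv - 3) = a * dv + b - dv ^+ 2 ->
  dv + c2 + (c1 - 2) = a * c1 + b - c1 ^+ 2 ->
  c1 + x3 + (c2 - 2) = a * c2 + b - c2 ^+ 2 ->
  y + dv + (cl - 2) = a * cl + b - cl ^+ 2 ->
  z + cl + (y - 2) = a * y + b - y ^+ 2 -> False.
Proof.
move=> hk k3 dw2 [->|->] [->|->] [->|->] [->|->] [->|->] [->|->] [->|->]; rewrite ?expr2 => h1 h2 h3 h4 h5;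
 have [ha|[ha|ha]] : a <= k + 2 \/ a = k + 3 \/ k + 4 <= a by lia.
all: try nia.
all: have [hk3|[hk3|hk3]] : k = 3 \/ k = 4 \/ 5 <= k by lia.
all: nia.
Qed.

Lemma vtype (a b : int) (m c l : nat) :
  c = (m + l)%N -> (l = 0%N \/ Posz c = a + b - 1) ->
  (Posz c = Posz m \/ Posz c = a + b - 1).
Proof. move=> -> [->|h]; [left; by rewrite addn0 | by right]. Qed.

Lemma conv3 (a b : int) (s1 s2 s3 c m l : nat) : c = (m + l)%N ->
  Posz (s1 + s2 + s3 + l)%N = a * Posz c + b - (Posz c) ^+ 2 ->
  Posz s1 + Posz s2 + Posz s3 + (Posz c - Posz m) = a * Posz c + b - (Posz c) ^+ 2.
Proof. move=> ec <-; rewrite ec !PoszD; lia. Qed.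

Lemma conv2 (a b : int) (s1 s2 c m l : nat) : c = (m + l)%N ->
  Posz (s1 + s2 + l)%N = a * Posz c + b - (Posz c) ^+ 2 ->
  Posz s1 + Posz s2 + (Posz c - Posz m) = a * Posz c + b - (Posz c) ^+ 2.
Proof. move=> ec <-; rewrite ec !PoszD; lia. Qed.

Lemma ar3n (a b : int) (dv dw c1 cl lv l1 l2 : nat) :
  (3 <= a + b - 1) -> (2 <= dw)%N ->
  dv = (3 + lv)%N -> (lv = 0%N \/ Posz dv = a + b - 1) ->
  c1 = (2 + l1)%N -> (l1 = 0%N \/ Posz c1 = a + b - 1) ->
  cl = (2 + l2)%N -> (l2 = 0%N \/ Posz cl = a + b - 1) ->
  Posz (dw + c1 + cl + lv)%N = a * Posz dv + b - (Posz dv) ^+ 2 ->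
  Posz (dv + cl + l1)%N = a * Posz c1 + b - (Posz c1) ^+ 2 ->
  Posz (c1 + dv + l2)%N = a * Posz cl + b - (Posz cl) ^+ 2 ->
  [/\ dv = 3%N, dw = 2%N, a = 6, b = -1 & ((c1 = 2 /\ cl = 4) \/ (cl = 2 /\ c1 = 4))%N].
Proof.
move=> k3 dw2 ev tv e1 t1 e2 t2 hv h1 h2.
have tv' := vtype ev tv; have t1' := vtype e1 t1; have t2' := vtype e2 t2.
have hw : 2 <= Posz dw by lia.
have hv' := conv3 ev hv. have h1' := conv2 e1 h1. have h2' := conv2 e2 h2.
have [] := @ar3 a b (a + b - 1) dv dw c1 cl erefl k3 hw tv' t1' t2' hv' h1' h2'.
move=> hdv hk ha hdw hc; split; try lia.
Qed.

Lemma ar4n (a b : int) (dv dw c1 c2 x3 cl y z lv l1 l2 l3 l4 l5 l6 : nat) :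
  (3 <= a + b - 1) -> (2 <= dw)%N ->
  dv = (3 + lv)%N -> (lv = 0%N \/ Posz dv = a + b - 1) ->
  c1 = (2 + l1)%N -> (l1 = 0%N \/ Posz c1 = a + b - 1) ->
  c2 = (2 + l2)%N -> (l2 = 0%N \/ Posz c2 = a + b - 1) ->
  x3 = (2 + l3)%N -> (l3 = 0%N \/ Posz x3 = a + b - 1) ->
  cl = (2 + l4)%N -> (l4 = 0%N \/ Posz cl = a + b - 1) ->
  y = (2 + l5)%N -> (l5 = 0%N \/ Posz y = a + b - 1) ->
  z = (2 + l6)%N -> (l6 = 0%N \/ Posz z = a + b - 1) ->
  Posz (dw + c1 + cl + lv)%N = a * Posz dv + b - (Posz dv) ^+ 2 ->
  Posz (dv + c2 + l1)%N = a * Posz c1 + b - (Posz c1) ^+ 2 ->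
  Posz (c1 + x3 + l2)%N = a * Posz c2 + b - (Posz c2) ^+ 2 ->
  Posz (y + dv + l4)%N = a * Posz cl + b - (Posz cl) ^+ 2 ->
  Posz (z + cl + l5)%N = a * Posz y + b - (Posz y) ^+ 2 -> False.
Proof.
move=> k3 dw2 ev tv e1 t1 e2 t2 e3 t3 e4 t4 e5 t5 e6 t6 hv h1 h2 h4 h5.
have tv' := vtype ev tv; have t1' := vtype e1 t1; have t2' := vtype e2 t2.
have t3' := vtype e3 t3; have t4' := vtype e4 t4; have t5' := vtype e5 t5.
have t6' := vtype e6 t6.
have hw : 2 <= Posz dw by lia.
exact: (@ar4 a b (a + b - 1) dv dw c1 c2 x3 cl y z erefl k3 hw tv' t1' t2' t3' t4' t5' t6'
  (conv3 ev hv) (conv2 e1 h1) (conv2 e2 h2) (conv2 e4 h4) (conv2 e5 h5)).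
Qed.

Unset Implicit Arguments.
Set Strict Implicit.

Ltac clr := repeat match goal with H : _ |- _ => clear H end.

Theorem lemma3p1 (T : finType) (e : rel T) (a b : int)
  (Hsimple : simple_graph e) (Hconn : connected_graph e)
  (Hab : in_Gab e a b) (Htri : tricyclic e)
  (Hpend : exists x : T, pendant e x)
  (B : {set T}) (HB : is_base e B)
  (v w : T) (us : seq T)
  (Hcyc : internal_cycle e B v us)
  (HN : [set x in B | e v x] = [set w; nth v us 0; last v us]) :
  [/\ deg e v = 3%N,
      (size us).+1 = 3%N,
      in_Gab e 6 (-1),
      deg e w = 2%N &
      (((deg e (nth v us 0))%:Z = 2 /\ (deg e (last v us))%:Z = a + b - 1)
       \/ ((deg e (last v us))%:Z = 2 /\ (deg e (nth v us 0))%:Z = a + b - 1))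
      /\ a + b - 1 = 4].
Proof.
move: Hsimple => [Hsym Hirr].
case: Hcyc => hsz [huniq /andP[hpath hlast] hallB hdegv hall2].
case: HB => HBr hBnz.
pose c := v :: us.
have hnode1 : nth v us 0 = nth v c 1 by [].
have hnodel : last v us = nth v c (size us) by rewrite (last_nth v).
have hdist : forall i j, (i <= size us)%N -> (j <= size us)%N ->
    (nth v c i == nth v c j) = (i == j).
  by move=> i j hi hj; apply: nth_uniq.
have hinB : forall i, (i <= size us)%N -> nth v c i \in B.
  by move=> i hi; apply: (all_nthP v hallB).
have hd2 : forall i, (0 < i <= size us)%N -> degIn e B (nth v c i) = 2%N.
  by move=> [|i] // /andP[_ hi]; apply/eqP; apply: (all_nthP v hall2 i hi).
have hedge : forall i, (i < size us)%N -> e (nth v c i) (nth v c i.+1).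
  by move=> i hi; apply: (pathP v hpath).
have hedgel : e (nth v c (size us)) (nth v c 0) by rewrite -hnodel.
set u1 := nth v us 0 in HN hnode1 *.
set ul := last v us in HN hnodel hlast *.
have hu1l : u1 != ul by rewrite hnode1 hnodel hdist //; move: hsz; clr; lia.
have hvu1 : e v u1 by rewrite hnode1; apply: (hedge 0%N); move: hsz; clr; lia.
have hvul : e v ul by rewrite Hsym.
have hdu1 : deg e u1 != 1%N.
  have := degIn_le e B u1; rewrite hnode1 hd2 //; move: hsz; clr; lia.
have hdul : deg e ul != 1%N.
  have := degIn_le e B ul; rewrite hnodel hd2 //; move: hsz; clr; lia.
have hdv : deg e v != 1%N by have := degIn_le e B v; move: hdegv; clr; lia.
have HL := outside_leaf Hsym Hconn Hab hvu1 hvul hu1l hdu1 hdul hdv HBr.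
have [x0 hx0] := Hpend.
have k3 := k_ge3 Hsym Hconn Hab hvu1 hvul hu1l hdu1 hdul hdv hx0.
have cyc : forall i pi ni, (0 < i <= size us)%N -> pi.+1 = i ->
    ni = (if (i < size us)%N then i.+1 else 0%N) -> exists l,
    [/\ deg e (nth v c i) = (2 + l)%N,
     (\sum_(u in nbhd e (nth v c i)) deg e u =
        deg e (nth v c pi) + deg e (nth v c ni) + l)%N &
     (l = 0%N \/ Posz (deg e (nth v c i)) = a + b - 1)].
  move=> i pi ni hi hpi ->; apply: (cyc_vertex Hsym Hab HL (hd2 i hi)).
  - by apply: hinB; move: hi hpi; clr; lia.
  - by case: ifP => h; apply: hinB; move: hi h; clr; lia.
  - by rewrite -hpi Hsym; apply: hedge; move: hi hpi; clr; lia.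
  - case: ifP => h; first by apply: hedge.
    by have -> : i = size us by move: hi h; clr; lia.
  - by case: ifP => h; rewrite hdist; move: hi hpi h hsz; clr; lia.
have [lv [hdvl hsv htv]] := Bsplit Hsym Hab v HL.
have eW : [set w; u1; ul] = w |: [set u1; ul] by apply/setP => x; rewrite !inE orbA.
have hcard : #|[set x in B | e v x]| = ((w \notin [set u1; ul]) + 2)%N.
  by rewrite HN eW cardsU1 cards2 hu1l.
have hwn : w \notin [set u1; ul].
  by apply: contraTN hdegv => hw; rewrite /degIn hcard hw.
have hdeg3 : degIn e B v = 3%N by rewrite /degIn hcard hwn.
rewrite HN eW big_setU1 //= big_setU1 ?inE // big_set1 in hsv.
have hwB : w \in [set x in B | e v x] by rewrite HN !inE eqxx.
move: hwB; rewrite inE => /andP[hwB hvw].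
have hdw : (2 <= deg e w)%N.
  have h1 : (0 < degIn e B w)%N.
    by rewrite /degIn card_gt0; apply/set0Pn; exists v; rewrite inE (hinB 0%N) // Hsym.
  have := hBnz w hwB; have := degIn_le e B w; move: h1; clr; lia.
have hv := Hab v; rewrite hsv addnA in hv.
have hdv3 : deg e v = (3 + lv)%N by rewrite hdvl hdeg3.
have [h2|h3] : size us = 2%N \/ (3 <= size us)%N by move: hsz; clr; lia.
- have hn2 : nth v c 2 = ul by rewrite hnodel h2.
  have q1 : (0 < 1 <= size us)%N by rewrite h2.
  have q2 : (0 < 2 <= size us)%N by rewrite h2.
  have r1 : 2%N = (if (1 < size us)%N then 2 else 0)%N by rewrite h2.
  have r2 : 0%N = (if (2 < size us)%N then 3 else 0)%N by rewrite h2.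
  have [l1 [e1 s1 t1]] := cyc 1%N 0%N 2%N q1 erefl r1.
  have [l2 [e2 s2 t2]] := cyc 2%N 1%N 0%N q2 erefl r2.
  rewrite -hnode1 in e1 s1 t1 s2.
  rewrite hn2 in e2 s2 t2 s1.
  change (nth v c 0) with v in s1; change (nth v c 0) with v in s2.
  have hu := Hab u1; rewrite s1 in hu.
  have hl := Hab ul; rewrite s2 in hl.
  have [E1 E2 E3 E4 E5] := ar3n k3 hdw hdv3 htv e1 t1 e2 t2 hv hu hl.
  subst a b; split => //.
  - by rewrite h2.
  - split => //.
    by case: E5 => [[-> ->]|[-> ->]]; [left|right].
- set n := size us in h3 hnodel hdist hinB hd2 hedge hedgel cyc *.
  have q1 : (0 < 1 <= n)%N by move: h3; clr; lia.
  have q2 : (0 < 2 <= n)%N by move: h3; clr; lia.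
  have q3 : (0 < 3 <= n)%N by move: h3; clr; lia.
  have qn : (0 < n <= n)%N by move: h3; clr; lia.
  have qn1 : (0 < n.-1 <= n)%N by move: h3; clr; lia.
  have qn2 : (0 < n.-2 <= n)%N by move: h3; clr; lia.
  have p_n : (n.-1).+1 = n by move: h3; clr; lia.
  have p_n1 : (n.-2).+1 = n.-1 by move: h3; clr; lia.
  have p_n2 : (n - 3)%N.+1 = n.-2 by move: h3; clr; lia.
  have r1 : 2%N = (if (1 < n)%N then 2 else 0)%N by rewrite ifT //; move: h3; clr; lia.
  have r2 : 3%N = (if (2 < n)%N then 3 else 0)%N by rewrite ifT //; move: h3; clr; lia.
  have rn : 0%N = (if (n < n)%N then n.+1 else 0)%N by rewrite ltnn.
  have rn1 : n = (if (n.-1 < n)%N then (n.-1).+1 else 0)%N.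
    by rewrite ifT p_n //; move: h3; clr; lia.
  have [l1 [e1 s1 t1]] := cyc 1%N 0%N 2%N q1 erefl r1.
  have [l2 [e2 s2 t2]] := cyc 2%N 1%N 3%N q2 erefl r2.
  have [l3 [e3 s3 t3]] := cyc 3%N 2%N _ q3 erefl erefl.
  have [l4 [e4 s4 t4]] := cyc n n.-1 0%N qn p_n rn.
  have [l5 [e5 s5 t5]] := cyc n.-1 n.-2 n qn1 p_n1 rn1.
  have [l6 [e6 s6 t6]] := cyc n.-2 (n - 3)%N _ qn2 p_n2 erefl.
  change (nth v c 0) with v in s1; change (nth v c 0) with v in s4.
  rewrite -hnode1 in e1 t1 s1 s2.
  rewrite -hnodel in e4 t4 s4 s5.
  have hu := Hab u1; rewrite s1 in hu.
  have hu2 := Hab (nth v c 2); rewrite s2 in hu2.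
  have hul := Hab ul; rewrite s4 in hul.
  have hul2 := Hab (nth v c n.-1); rewrite s5 in hul2.
  exfalso.
  exact: (ar4n k3 hdw hdv3 htv e1 t1 e2 t2 e3 t3 e4 t4 e5 t5 e6 t6 hv hu hu2 hul hul2).
Qed.
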